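(* Suppose that there exists $\lambda>1$ such that $f:\mathbb Q\to\mathbb C$ has property $\mathscr S(\lambda)$, and let $f^\ast$ be defined by $f^\ast(x)=f(x)$ for $x\in\mathbb Q$ and $f^\ast(x)=\lim_{y\in\mathbb Q\cap\mathfrak T(B),y\to x}f(y)$ for $x\in\mathfrak T(B)\setminus\mathbb Q$, $B>0$ (this limit exists and is independent of $B$). Then, as $q\to\infty$, $$f^\ast(a/q)=f^\ast(x)+o(1)$$ uniformly for all $a\in\mathfrak A_q$ and all $x\in\big(\tfrac{a-q^{1/4}}q,\tfrac{a+q^{1/4}}q\big)\cap\big(\mathfrak T_q\cup\tfrac1q\mathfrak A_q\big)$.
   Context: Continued fractions: $x=[b_0(x);b_1(x),\dots]$, $r(x)$ the length for rational $x$, $r(x)=\infty$ otherwise. $\mathfrak T(B):=\{x\in\mathbb R\colon b_j(x)\leq\max(B,j(\log j)^2)\ \forall 1\leq j\leq r(x)\}$. $V(B,m,x):=\{x'\in\mathbb Q\cap\mathfrak T(B)\colon r(x')\geq m,\ b_j(x')=b_j(x)\ \forall j\leq m\}$. Property $\mathscr S(\lambda)$: $\sup_{x\in\mathfrak T(m^\lambda)}\sup_{x',x''\in V(m^\lambda,m,x)}|f(x')-f(x'')|\to0$ as $m\to\infty$. For $q\geq2$: $\mathfrak A_q:=\{0\leq a<q\colon(a,q)=1,\ a/q\in\mathfrak T((\log q)(\log\log q)^2)\}$ and $\mathfrak T_q:=([0,1)\setminus\mathbb Q)\cap\mathfrak T((\log q)(\log\log q)^2)$; $\frac1q\mathfrak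 A_q=\{a/q\colon a\in\mathfrak A_q\}$. *)

(* Defs.v *)
From Stdlib Require Import Reals Lra Lia ZArith QArith Qcanon Qreals.
From Coquelicot Require Import Coquelicot.
Open Scope R_scope.

Definition qc2R (y : Qc) : R := Q2R (this y).

Definition is_rat (x : R) : Prop := exists y : Qc, x = qc2R y.

(** Continued fraction algorithm (Gauss map). [cf_rem x n] is the n-th
    complete quotient x_n of x (x_0 = x, x_{n+1} = 1/frac(x_n)), or [None]
    if the expansion has already terminated (frac(x_k) = 0 for some k < n).
    For rational x this yields the Euclidean expansion (last partial
    quotient >= 2 when r(x) >= 1); r(x) is the largest n with
    [cf_rem x n <> None], and r(x) = infinity for irrational x. *)
Fixpoint cf_rem (x : R) (n : nat) : option R :=
  match n with
  | O => Some x
  | S n' =>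
      match cf_rem x n' with
      | None => None
      | Some t => if Req_EM_T (frac_part t) 0 then None
                  else Some (/ frac_part t)
      end
  end.

Definition cf_digit (x : R) (n : nat) : option Z :=
  match cf_rem x n with
  | None => None
  | Some t => Some (Int_part t)
  end.

Definition cf_len_ge (x : R) (m : nat) : Prop := cf_rem x m <> None.

Definition inT (B x : R) : Prop :=
  forall (j : nat) (k : Z), (1 <= j)%nat -> cf_digit x j = Some k ->
    IZR k <= Rmax B (INR j * (ln (INR j)) ^ 2).

Definition inV (B : R) (m : nat) (x : R) (x' : Qc) : Prop :=
  inT B (qc2R x') /\ cf_len_ge (qc2R x') m /\
  (forall j : nat, (j <= m)%nat -> cf_digit (qc2R x') j = cf_digit x j).

Definition propS (lam : R) (f : Qc -> C) : Prop :=
  forall eps : R, 0 < eps -> exists M : nat, forall m : nat, (M <= m)%nat ->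
    forall x : R, inT (Rpower (INR m) lam) x ->
    forall x' x'' : Qc,
      inV (Rpower (INR m) lam) m x x' -> inV (Rpower (INR m) lam) m x x'' ->
      Cmod (Cminus (f x') (f x'')) <= eps.

Definition is_fstar (f : Qc -> C) (fstar : R -> C) : Prop :=
  (forall y : Qc, fstar (qc2R y) = f y) /\
  (forall B x : R, 0 < B -> inT B x -> ~ is_rat x ->
     forall eps : R, 0 < eps -> exists delta : R, 0 < delta /\
       forall y : Qc, inT B (qc2R y) -> Rabs (qc2R y - x) < delta ->
         Cmod (Cminus (f y) (fstar x)) < eps).

Definition Bq (q : nat) : R := ln (INR q) * (ln (ln (INR q))) ^ 2.

Definition inA (q a : nat) : Prop :=
  (a < q)%nat /\ Nat.gcd a q = 1%nat /\ inT (Bq q) (INR a / INR q).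

Definition inTq (q : nat) (x : R) : Prop :=
  0 <= x < 1 /\ ~ is_rat x /\ inT (Bq q) x.

Definition in_scaledA (q : nat) (x : R) : Prop :=
  exists a' : nat, inA q a' /\ x = INR a' / INR q.

(* Main.v *)
Require Import Defs.
From Stdlib Require Import Reals QArith Qcanon Qreals.
From Coquelicot Require Import Coquelicot.
From Stdlib Require Import Lra Lia ZArith ClassicalEpsilon Classical.
Open Scope R_scope.

Lemma frac_def t : frac_part t = t - IZR (Int_part t).
Proof. reflexivity. Qed.

Lemma Int_part_shift (z : Z) (u : R) : 0 <= u < 1 -> Int_part (IZR z + u) = z.
Proof. intros H. symmetry. apply Int_part_spec. lra. Qed.

Lemma frac_bounds t : 0 <= frac_part t < 1.
Proof. destruct (base_fp t). lra. Qed.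

Lemma cf_rem_S x n : cf_rem x (S n) =
  match cf_rem x n with
  | None => None
  | Some t => if Req_EM_T (frac_part t) 0 then None else Some (/ frac_part t)
  end.
Proof. reflexivity. Qed.

Lemma cf_rem_next x n t : cf_rem x n = Some t -> frac_part t <> 0 ->
  cf_rem x (S n) = Some (/ frac_part t).
Proof. intros H1 H2. rewrite cf_rem_S, H1. destruct (Req_EM_T _ 0); congruence. Qed.

Lemma cf_rem_S_inv x n t1 : cf_rem x (S n) = Some t1 ->
  exists t, cf_rem x n = Some t /\ frac_part t <> 0 /\ t1 = / frac_part t.
Proof.
  rewrite cf_rem_S. destruct (cf_rem x n) as [t|]; [|discriminate].
  destruct (Req_EM_T _ 0); [discriminate|]. intros H; inversion H; eauto.
Qed.

Lemma cf_rem_None_S x n : cf_rem x n = None -> cf_rem x (S n) = None.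
Proof. intros H. rewrite cf_rem_S, H. reflexivity. Qed.

Lemma cf_rem_None_le x n k : (n <= k)%nat -> cf_rem x n = None -> cf_rem x k = None.
Proof. induction 1; auto. intros H0; apply cf_rem_None_S; auto. Qed.

Lemma cf_rem_gt1 x n t : cf_rem x (S n) = Some t -> 1 < t.
Proof.
  intros H. destruct (cf_rem_S_inv _ _ _ H) as [s [_ [Hf ->]]].
  destruct (frac_bounds s) as [Ha Hb]. assert (0 < frac_part s) by lra.
  rewrite <- Rinv_1. apply Rinv_lt_contravar; lra.
Qed.

Lemma Int_part_ge1 t : 1 <= t -> (1 <= Int_part t)%Z.
Proof.
  intros H. pose proof (frac_bounds t). rewrite frac_def in H0.
  assert (0 < IZR (Int_part t)) by lra. apply lt_IZR in H1. lia.
Qed.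

Lemma margin_step s t : Rabs (s - t) < frac_part s -> Rabs (s - t) < 1 - frac_part s ->
  Int_part t = Int_part s /\ frac_part t <> 0 /\ frac_part t - frac_part s = t - s.
Proof.
  intros H1 H2. pose proof (frac_bounds s).
  assert (E : t = IZR (Int_part s) + (frac_part s + (t - s))) by (rewrite frac_def; ring).
  assert (Hb : 0 < frac_part s + (t - s) < 1).
  { split.
    - pose proof (Rle_abs (s - t)). lra.
    - pose proof (Rle_abs (-(s - t))). rewrite Rabs_Ropp in H0. lra. }
  assert (HI : Int_part t = Int_part s).
  { rewrite E. apply Int_part_shift. lra. }
  split; [exact HI|]. rewrite (frac_def t), HI. split.
  - rewrite frac_def in Hb. lra.
  - rewrite frac_def. ring.
Qed.

Definition bounded_upto (x K : R) (N : nat) : Prop :=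
  forall k, (1 <= k <= N)%nat -> exists s, cf_rem x k = Some s /\ s <= K.

Lemma margins x K n k s : 1 <= K -> bounded_upto x K (n+2) -> (k <= n)%nat ->
  cf_rem x k = Some s ->
  / K <= frac_part s /\ / (K * K) <= 1 - frac_part s /\ / frac_part s <= K.
Proof.
  intros HK HB Hk Hs.
  destruct (HB (S k)) as [s1 [H1 Hs1]]; [lia|].
  destruct (HB (S (S k))) as [s2 [H2 Hs2]]; [lia|].
  destruct (cf_rem_S_inv _ _ _ H1) as [s' [E [Hf Hs1e]]].
  rewrite Hs in E; inversion E; subst s'; clear E.
  destruct (cf_rem_S_inv _ _ _ H2) as [s1' [E [Hf1 Hs2e]]].
  rewrite H1 in E; inversion E; subst s1'; clear E.
  pose proof (cf_rem_gt1 _ _ _ H1) as G1.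
  pose proof (cf_rem_gt1 _ _ _ H2) as G2.
  pose proof (frac_bounds s) as Fs. pose proof (frac_bounds s1) as Fs1.
  assert (fs_pos : 0 < frac_part s) by lra.
  assert (fs1_pos : 0 < frac_part s1) by lra.
  assert (Efs : frac_part s = / s1) by (rewrite Hs1e, Rinv_inv; reflexivity).
  assert (Efs1 : frac_part s1 = / s2) by (rewrite Hs2e, Rinv_inv; reflexivity).
  assert (I1 := Int_part_ge1 s1 (Rlt_le _ _ G1)). apply IZR_le in I1.
  assert (Hs1dec : s1 = IZR (Int_part s1) + frac_part s1) by (rewrite frac_def; ring).
  assert (A1 : / K <= / s2) by (apply Rinv_le_contravar; lra).
  assert (A2 : / K <= / s1) by (apply Rinv_le_contravar; lra).
  split; [lra|]. split.
  - rewrite Efs. assert (s1 - 1 >= / K) by lra.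
    assert (1 - / s1 = (s1 - 1) / s1) by (field; lra). rewrite H0.
    assert (/ (K*K) = (/K) / K) by (field; lra). rewrite H3.
    unfold Rdiv. apply Rmult_le_compat; try lra.
    + left; apply Rinv_0_lt_compat; lra.
    + left; apply Rinv_0_lt_compat; lra.
  - rewrite <- Hs1e. exact Hs1.
Qed.

Lemma shadow_inv x y K n : 1 <= K -> bounded_upto x K (n+2) ->
  Rabs (x - y) * (K+1)^(2*n+2) < 1 ->
  forall k, (k <= n)%nat -> exists s t, cf_rem x k = Some s /\ cf_rem y k = Some t /\
     Rabs (s - t) <= Rabs (x - y) * (K * (K+1))^k.
Proof.
  intros HK HB Hd. induction k as [|k IH]; intros Hk.
  - exists x, y. simpl. repeat split; lra.
  - destruct IH as [s [t [Hs [Ht Hst]]]]; [lia|].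
    destruct (margins x K n k s HK HB ltac:(lia) Hs) as [M1 [M2 M3]].
    set (d := Rabs (s - t)) in *.
    assert (Hd2 : d * (K+1)^2 < 1).
    { apply Rle_lt_trans with (Rabs (x-y) * (K+1)^(2*n+2)); [|exact Hd].
      apply Rle_trans with (Rabs (x - y) * (K * (K + 1)) ^ k * (K+1)^2).
      { apply Rmult_le_compat_r; [apply pow_le; lra| exact Hst]. }
      rewrite Rmult_assoc. apply Rmult_le_compat_l; [apply Rabs_pos|].
      replace (2*n+2)%nat with (2*k + 2 + 2*(n-k))%nat by lia.
      rewrite !pow_add.
      assert (1 <= (K+1)^(2*(n-k))) by (apply pow_R1_Rle; lra).
      assert ((K * (K + 1)) ^ k <= (K+1)^(2*k)).
      { rewrite pow_mult. apply pow_incr. split; [nra|]. simpl. nra. }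
      assert (0 <= (K * (K + 1)) ^ k) by (apply pow_le; nra).
      assert (0 <= (K+1)^2) by (apply pow_le; lra).
      assert (0 <= (K+1)^(2*k)) by (apply pow_le; lra).
      set (P := (K * (K + 1)) ^ k) in *. set (Q := (K + 1) ^ (2 * k)) in *.
      set (Q2 := (K + 1) ^ 2) in *. set (Q3 := (K + 1) ^ (2 * (n - k))) in *.
      apply Rle_trans with (Q * Q2). { apply Rmult_le_compat_r; lra. }
      assert (0 <= Q * Q2) by nra. nra. }
    assert (dpos : 0 <= d) by apply Rabs_pos.
    assert (Kp : 0 < K) by lra.
    assert (dK1 : d < / (K * (K+1))).
    { apply Rmult_lt_reg_r with (K * (K+1)); [nra|]. rewrite Rinv_l by nra.
      simpl in Hd2. nra. }
    assert (dK2 : d < / (K * K)).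
    { apply Rmult_lt_reg_r with (K * K); [nra|]. rewrite Rinv_l by nra.
      simpl in Hd2. nra. }
    assert (dK3 : / (K*K) <= / K).
    { apply Rinv_le_contravar; nra. }
    destruct (margin_step s t ltac:(unfold d in *; lra) ltac:(unfold d in *; lra)) as [HI [Hft Hfd]].
    exists (/ frac_part s), (/ frac_part t).
    split; [apply cf_rem_next; auto; lra|].
    split; [apply cf_rem_next; auto|].
    pose proof (frac_bounds s). pose proof (frac_bounds t).
    assert (fsp : 0 < frac_part s) by (assert (0 < /K) by (apply Rinv_0_lt_compat; lra); lra).
    assert (ftl : / (K+1) <= frac_part t).
    { assert (frac_part t >= frac_part s - d).
      { unfold d. pose proof (Rle_abs (s - t)). lra. }
      assert (/ K - / (K * (K+1)) = / (K+1)) by (field; lra). lra. }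
    assert (ftp : 0 < frac_part t) by (assert (0 < /(K+1)) by (apply Rinv_0_lt_compat; lra); lra).
    assert (T1 : / frac_part t <= K + 1).
    { rewrite <- (Rinv_inv (K+1)). apply Rinv_le_contravar; [apply Rinv_0_lt_compat; lra| exact ftl]. }
    assert (E : / frac_part s - / frac_part t = (frac_part t - frac_part s) * (/ frac_part s) * (/ frac_part t)) by (field; lra).
    rewrite E, Hfd. rewrite !Rabs_mult.
    rewrite (Rabs_right (/ frac_part s)) by (left; apply Rinv_0_lt_compat; lra).
    rewrite (Rabs_right (/ frac_part t)) by (left; apply Rinv_0_lt_compat; lra).
    rewrite <- Rabs_Ropp. replace (- (t - s)) with (s - t) by ring. fold d.
    simpl pow. 
    assert (0 <= / frac_part s) by (left; apply Rinv_0_lt_compat; lra).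
    assert (0 <= / frac_part t) by (left; apply Rinv_0_lt_compat; lra).
    apply Rle_trans with (d * K * (K+1)).
    + apply Rmult_le_compat; try nra.
    + assert (0 <= K * (K+1)) by nra. nra.
Qed.

Lemma small_d x y K n k d : 1 <= K -> Rabs (x - y) * (K+1)^(2*n+2) < 1 -> (k <= n)%nat ->
  0 <= d -> d <= Rabs (x - y) * (K * (K+1))^k -> d < / (K * K).
Proof.
  intros HK Hd Hk dpos Hst.
  assert (Hd2 : d * (K+1)^2 < 1).
  { apply Rle_lt_trans with (Rabs (x-y) * (K+1)^(2*n+2)); [|exact Hd].
    apply Rle_trans with (Rabs (x - y) * (K * (K + 1)) ^ k * (K+1)^2).
    { apply Rmult_le_compat_r; [apply pow_le; lra| exact Hst]. }
    rewrite Rmult_assoc. apply Rmult_le_compat_l; [apply Rabs_pos|].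
    replace (2*n+2)%nat with (2*k + 2 + 2*(n-k))%nat by lia.
    rewrite !pow_add.
    assert (1 <= (K+1)^(2*(n-k))) by (apply pow_R1_Rle; lra).
    assert ((K * (K + 1)) ^ k <= (K+1)^(2*k)).
    { rewrite pow_mult. apply pow_incr. split; [nra|]. simpl. nra. }
    assert (0 <= (K * (K + 1)) ^ k) by (apply pow_le; nra).
    assert (0 <= (K+1)^2) by (apply pow_le; lra).
    assert (0 <= (K+1)^(2*k)) by (apply pow_le; lra).
    set (P := (K * (K + 1)) ^ k) in *. set (Q := (K + 1) ^ (2 * k)) in *.
    set (Q2 := (K + 1) ^ 2) in *. set (Q3 := (K + 1) ^ (2 * (n - k))) in *.
    apply Rle_trans with (Q * Q2). { apply Rmult_le_compat_r; lra. }
    assert (0 <= Q * Q2) by nra. nra. }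
  apply Rmult_lt_reg_r with (K * K); [nra|]. rewrite Rinv_l by nra.
  simpl in Hd2. nra.
Qed.

Lemma shadow x y K n : 1 <= K -> bounded_upto x K (n+2) ->
  Rabs (x - y) * (K+1)^(2*n+2) < 1 ->
  cf_len_ge y n /\ forall j, (j <= n)%nat -> cf_digit y j = cf_digit x j.
Proof.
  intros HK HB Hd. split.
  - destruct (shadow_inv x y K n HK HB Hd n (le_n n)) as [s [t [_ [Ht _]]]].
    unfold cf_len_ge. congruence.
  - intros j Hj.
    destruct (shadow_inv x y K n HK HB Hd j Hj) as [s [t [Hs [Ht Hst]]]].
    destruct (margins x K n j s HK HB Hj Hs) as [M1 [M2 M3]].
    pose proof (small_d x y K n j _ HK Hd Hj (Rabs_pos _) Hst).
    assert (/ (K*K) <= / K) by (apply Rinv_le_contravar; nra).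
    destruct (margin_step s t ltac:(lra) ltac:(lra)) as [HI _].
    unfold cf_digit. rewrite Hs, Ht, HI. reflexivity.
Qed.

Lemma ln_lt_self x : 0 < x -> ln x < x.
Proof.
  intros H. rewrite <- (ln_exp x) at 2. apply ln_increasing; auto.
  pose proof (exp_ineq1 x). destruct (Req_dec x 0).
  - subst. rewrite exp_0. lra.
  - specialize (H0 H1). lra.
Qed.

Lemma ln_nonneg x : 1 <= x -> 0 <= ln x.
Proof. intros H. destruct (Req_dec x 1). subst; rewrite ln_1; lra.
  left. rewrite <- ln_1. apply ln_increasing; lra. Qed.

Lemma jlog_bound (k : nat) : (1 <= k)%nat -> 0 <= INR k * ln (INR k) ^ 2 <= INR k ^ 3.
Proof.
  intros Hk. assert (1 <= INR k) by (apply (le_INR 1); auto).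
  pose proof (ln_nonneg _ H). pose proof (ln_lt_self (INR k) ltac:(lra)).
  split.
  - apply Rmult_le_pos; [lra| apply pow_le; lra].
  - simpl. assert (ln (INR k) * ln (INR k) <= INR k * INR k) by nra. nra.
Qed.

Lemma inT_mono B B' x : B <= B' -> inT B x -> inT B' x.
Proof.
  intros HB H j k Hj Hd. specialize (H j k Hj Hd).
  apply Rle_trans with (1 := H). apply Rle_max_compat_r. auto.
Qed.

Lemma digit_bound B x k s : 0 <= B -> inT B x -> (1 <= k)%nat -> cf_rem x k = Some s ->
  s <= B + INR k ^ 3 + 1.
Proof.
  intros HB HT Hk Hs.
  assert (Hd : cf_digit x k = Some (Int_part s)) by (unfold cf_digit; rewrite Hs; reflexivity).
  pose proof (HT k _ Hk Hd). pose proof (jlog_bound k Hk).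
  pose proof (Rmax_le_Rplus B (INR k * ln (INR k) ^ 2) HB ltac:(lra)).
  pose proof (frac_bounds s). rewrite frac_def in H2. lra.
Qed.

Lemma INR_pow3_mono (a b : nat) : (a <= b)%nat -> INR a ^ 3 <= INR b ^ 3.
Proof. intros H. apply pow_incr. split; [apply pos_INR| apply le_INR; auto]. Qed.

Lemma bounded_of_inT B x N : 0 <= B -> inT B x ->
  (forall k, (k <= N)%nat -> cf_rem x k <> None) ->
  bounded_upto x (B + INR N ^ 3 + 1) N.
Proof.
  intros HB HT Hex k Hk. destruct (cf_rem x k) as [s|] eqn:E.
  - exists s. split; auto. pose proof (digit_bound B x k s HB HT ltac:(lia) E).
    pose proof (INR_pow3_mono k N ltac:(lia)). lra.
  - exfalso. apply (Hex k); auto; lia.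
Qed.

Lemma is_rat_Q x : is_rat x <-> exists r : Q, x = Q2R r.
Proof.
  split.
  - intros [y ->]. exists (this y). reflexivity.
  - intros [r ->]. exists (Q2Qc r). unfold qc2R. simpl. apply Qeq_eqR.
    symmetry. apply Qred_correct.
Qed.

Lemma is_rat_IZR z : is_rat (IZR z).
Proof. apply is_rat_Q. exists (inject_Z z). unfold Q2R. simpl. field. Qed.

Lemma is_rat_plus a b : is_rat a -> is_rat b -> is_rat (a + b).
Proof.
  rewrite !is_rat_Q. intros [r ->] [s ->]. exists (r + s)%Q. rewrite Q2R_plus; auto.
Qed.

Lemma is_rat_inv a : a <> 0 -> is_rat a -> is_rat (/ a).
Proof.
  rewrite !is_rat_Q. intros Ha [r ->]. exists (/ r)%Q. rewrite Q2R_inv; auto.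
  intros E. apply Ha. apply Qeq_eqR in E. rewrite E. unfold Q2R; simpl. field.
Qed.

Lemma rat_back x n s : cf_rem x n = Some s -> is_rat s -> is_rat x.
Proof.
  revert s. induction n as [|n IH]; intros s Hs Hr.
  - simpl in Hs. inversion Hs; subst; auto.
  - destruct (cf_rem_S_inv _ _ _ Hs) as [t [Ht [Hf ->]]].
    apply (IH t Ht).
    assert (is_rat (frac_part t)).
    { rewrite <- (Rinv_inv (frac_part t)). apply is_rat_inv; auto.
      apply Rinv_neq_0_compat; auto. }
    replace t with (IZR (Int_part t) + frac_part t) by (rewrite frac_def; ring).
    apply is_rat_plus; auto. apply is_rat_IZR.
Qed.

Lemma irr_cf x : ~ is_rat x -> forall n, exists s, cf_rem x n = Some s /\ frac_part s <> 0.
Proof.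
  intros Hx n. induction n as [|n [s [Hs Hf]]].
  - exists x. split; [reflexivity|]. intros E. apply Hx.
    replace x with (IZR (Int_part x) + frac_part x) by (rewrite frac_def; ring).
    rewrite E, Rplus_0_r. apply is_rat_IZR.
  - exists (/ frac_part s). split; [apply cf_rem_next; auto|].
    intros E. apply Hx. apply (rat_back x (S n) (/ frac_part s)); [apply cf_rem_next; auto|].
    set (u := / frac_part s) in *.
    replace u with (IZR (Int_part u) + frac_part u) by (rewrite frac_def; ring).
    rewrite E, Rplus_0_r. apply is_rat_IZR.
Qed.

Lemma gcd_nat_Z (a q : nat) : Nat.gcd a q = 1%nat -> Z.gcd (Z.of_nat a) (Z.of_nat q) = 1%Z.
Proof.
  intros H. set (g := Z.gcd (Z.of_nat a) (Z.of_nat q)).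
  assert (g0 : (0 <= g)%Z) by apply Z.gcd_nonneg.
  destruct (Z.gcd_divide_l (Z.of_nat a) (Z.of_nat q)) as [c Hc].
  destruct (Z.gcd_divide_r (Z.of_nat a) (Z.of_nat q)) as [d Hd].
  fold g in Hc, Hd.
  assert (Nat.divide (Z.to_nat g) a).
  { destruct (Z.eq_dec g 0) as [E|E].
    - exists 0%nat. rewrite E in Hc. lia.
    - exists (Z.to_nat c). assert (0 <= c)%Z by nia. nia. }
  assert (Nat.divide (Z.to_nat g) q).
  { destruct (Z.eq_dec g 0) as [E|E].
    - exists 0%nat. rewrite E in Hd. lia.
    - exists (Z.to_nat d). assert (0 <= d)%Z by nia. nia. }
  pose proof (Nat.gcd_greatest _ _ _ H0 H1). rewrite H in H2.
  apply Nat.divide_1_r in H2. lia.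
Qed.

Lemma frac_ratio (U V : Z) : (0 < V)%Z ->
  frac_part (IZR U / IZR V) = IZR (U mod V) / IZR V.
Proof.
  intros HV. pose proof (Z.div_mod U V ltac:(lia)). pose proof (Z.mod_pos_bound U V HV).
  assert (E : IZR U / IZR V = IZR (U / V) + IZR (U mod V) / IZR V).
  { assert (IZR V <> 0) by (apply not_0_IZR; lia).
    rewrite H at 1. rewrite plus_IZR, mult_IZR. field; auto. }
  assert (B : 0 <= IZR (U mod V) / IZR V < 1).
  { assert (0 < IZR V) by (apply IZR_lt; lia).
    destruct H0 as [H0a H0b]. apply IZR_le in H0a. apply IZR_lt in H0b.
    split. apply Rmult_le_pos; [lra| left; apply Rinv_0_lt_compat; lra].
    apply Rmult_lt_reg_r with (IZR V); auto. unfold Rdiv. rewrite Rmult_assoc, Rinv_l by lra. lra. }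
  rewrite frac_def, E, Int_part_shift; auto. ring.
Qed.

Lemma euclid_len (a q : nat) K N : (0 < q)%nat -> Nat.gcd a q = 1%nat -> 1 <= K ->
  (forall k s, (1 <= k <= N)%nat -> cf_rem (INR a / INR q) k = Some s -> s <= K) ->
  K ^ N < INR q -> cf_rem (INR a / INR q) N <> None.
Proof.
  intros Hq Hg HK HB HN.
  set (x := INR a / INR q) in *.
  assert (Inv : forall k, (k <= N)%nat ->
    (exists s U V, cf_rem x k = Some s /\ (0 < V)%Z /\ Z.gcd U V = 1%Z /\
        s = IZR U / IZR V /\ INR q <= IZR V * K ^ k) \/
    (cf_rem x k = None /\ INR q <= K ^ k)).
  { induction k as [|k IH]; intros Hk.
    - left. exists x, (Z.of_nat a), (Z.of_nat q). split; [reflexivity|].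
      split; [lia|]. split; [apply gcd_nat_Z; auto|]. split.
      + unfold x. rewrite !INR_IZR_INZ. reflexivity.
      + rewrite <- INR_IZR_INZ. simpl. lra.
    - assert (Kk : 1 <= K ^ k) by (apply pow_R1_Rle; lra).
      destruct (IH ltac:(lia)) as [[s [U [V [Hs [HV [HUV [Es Hqb]]]]]]] | [Hn Hqb]].
      + assert (Vp : 0 < IZR V) by (apply IZR_lt; lia).
        destruct (Req_dec (frac_part s) 0) as [F0|F0].
        * right. split. { rewrite cf_rem_S, Hs. destruct (Req_EM_T _ 0); congruence. }
          rewrite Es, frac_ratio in F0 by auto.
          assert (IZR (U mod V) = 0).
          { apply Rmult_eq_reg_r with (/ IZR V). rewrite Rmult_0_l. exact F0.
            apply Rinv_neq_0_compat; lra. }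
          apply eq_IZR in H.
          assert (V = 1)%Z.
          { assert (Z.divide V U) by (apply Z.mod_divide; lia).
            assert (Z.divide V (Z.gcd U V)) by (apply Z.gcd_greatest; auto; apply Z.divide_refl).
            rewrite HUV in H1. apply Z.divide_1_r in H1. lia. }
          subst V. simpl pow. rewrite Rmult_1_l in Hqb. nra.
        * left. set (W := (U mod V)%Z).
          assert (FW : frac_part s = IZR W / IZR V) by (rewrite Es; apply frac_ratio; auto).
          assert (W <> 0)%Z. { intros E. apply F0. rewrite FW. rewrite E. unfold Rdiv. ring. }
          pose proof (Z.mod_pos_bound U V HV). fold W in H0.
          assert (Wp : 0 < IZR W) by (apply IZR_lt; lia).
          exists (/ frac_part s), V, W. split; [apply cf_rem_next; auto|].
          split; [lia|]. split.
          { unfold W. rewrite Z.gcd_comm, Z.gcd_mod by lia. rewrite Z.gcd_comm. auto. }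
          split. { rewrite FW. field. split; lra. }
          assert (Hs1 : / frac_part s <= K).
          { apply (HB (S k)); [lia|]. apply cf_rem_next; auto. }
          rewrite FW in Hs1. simpl pow.
          assert (IZR V = IZR W * (/ (IZR W / IZR V))) by (field; split; lra).
          rewrite H1 in Hqb.
          assert (0 < / (IZR W / IZR V)) by (apply Rinv_0_lt_compat; apply Rdiv_lt_0_compat; lra).
          apply Rle_trans with (1 := Hqb). rewrite !Rmult_assoc.
          apply Rmult_le_compat_l; [lra|]. apply Rmult_le_compat_r; lra.
      + right. split; [apply cf_rem_None_S; auto|]. simpl. nra. }
  destruct (Inv N (le_n N)) as [[s [_ [_ [Hs _]]]] | [_ H]]; [congruence| lra].
Qed.

Definition sq x k := match cf_rem x k with Some s => s | None => 0 end.
Definition bb x k := Int_part (sq x k).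
Fixpoint zz x n c j := match j with O => IZR c | S j' => IZR (bb x (n - j')) + / zz x n c j' end.
Definition zk x n c k := zz x n c (n + 1 - k).

Lemma zk_last x n c : zk x n c (n+1) = IZR c.
Proof. unfold zk. replace (n + 1 - (n + 1))%nat with O by lia. reflexivity. Qed.

Lemma zk_step x n c k : (k <= n)%nat -> zk x n c k = IZR (bb x k) + / zk x n c (S k).
Proof.
  intros Hk. unfold zk. replace (n + 1 - k)%nat with (S (n - k)) by lia.
  simpl. replace (n - (n - k))%nat with k by lia.
  replace (n + 1 - S k)%nat with (n - k)%nat by lia. reflexivity.
Qed.

Lemma sq_spec x k : ~ is_rat x -> cf_rem x k = Some (sq x k) /\ frac_part (sq x k) <> 0.
Proof.
  intros Hx. destruct (irr_cf x Hx k) as [s [Hs Hf]]. unfold sq. rewrite Hs. auto.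
Qed.

Lemma sq_gt1 x k : ~ is_rat x -> (1 <= k)%nat -> 1 < sq x k.
Proof.
  intros Hx Hk. destruct k; [lia|]. apply (cf_rem_gt1 x k). apply sq_spec; auto.
Qed.

Lemma sq_next x k : ~ is_rat x -> sq x (S k) = / frac_part (sq x k).
Proof.
  intros Hx. destruct (sq_spec x k Hx) as [H1 H2].
  pose proof (cf_rem_next _ _ _ H1 H2). destruct (sq_spec x (S k) Hx) as [H3 _].
  congruence.
Qed.

Lemma sq_decomp x k : ~ is_rat x -> sq x k = IZR (bb x k) + / sq x (S k).
Proof.
  intros Hx. rewrite sq_next by auto. rewrite Rinv_inv. unfold bb. rewrite frac_def. ring.
Qed.

Lemma bb_ge1 x k : ~ is_rat x -> (1 <= k)%nat -> (1 <= bb x k)%Z.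
Proof. intros Hx Hk. apply Int_part_ge1. left. apply sq_gt1; auto. Qed.

Lemma zk_gt1 x n c k : ~ is_rat x -> (2 <= c)%Z -> (1 <= k <= n + 1)%nat -> 1 < zk x n c k.
Proof.
  intros Hx Hc. 
  assert (forall j, (j <= n)%nat -> 1 < zz x n c j).
  { induction j as [|j IH]; intros Hj.
    - simpl. apply IZR_le in Hc. lra.
    - simpl. assert (1 <= bb x (n - j))%Z by (apply bb_ge1; auto; lia).
      apply IZR_le in H. specialize (IH ltac:(lia)).
      assert (0 < / zz x n c j) by (apply Rinv_0_lt_compat; lra). lra. }
  intros Hk. unfold zk. apply H. lia.
Qed.

Lemma inv_lt1 z : 1 < z -> 0 < / z < 1.
Proof. intros H. split. apply Rinv_0_lt_compat; lra. rewrite <- Rinv_1. apply Rinv_lt_contravar; lra. Qed.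

Lemma zk_cf x n c : ~ is_rat x -> (2 <= c)%Z ->
  forall k, (k <= n + 1)%nat -> cf_rem (zk x n c 0) k = Some (zk x n c k).
Proof.
  intros Hx Hc. induction k as [|k IH]; intros Hk.
  - reflexivity.
  - specialize (IH ltac:(lia)).
    pose proof (zk_gt1 x n c (S k) Hx Hc ltac:(lia)). pose proof (inv_lt1 _ H).
    assert (Hf : frac_part (zk x n c k) = / zk x n c (S k)).
    { rewrite (zk_step x n c k) by lia. rewrite frac_def, Int_part_shift by lra. ring. }
    rewrite (cf_rem_next _ _ _ IH) by lra. rewrite Hf, Rinv_inv. reflexivity.
Qed.

Lemma zk_end x n c : ~ is_rat x -> (2 <= c)%Z -> cf_rem (zk x n c 0) (n + 2) = None.
Proof.
  intros Hx Hc. replace (n+2)%nat with (S (n+1)) by lia. rewrite cf_rem_S.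
  rewrite zk_cf by auto. rewrite zk_last.
  destruct (Req_EM_T _ 0) as [_|F]; [reflexivity|].
  exfalso; apply F. rewrite frac_def. rewrite <- (Rplus_0_r (IZR c)) at 2. rewrite Int_part_shift by lra. ring.
Qed.

Lemma zk_digit x n c k : ~ is_rat x -> (2 <= c)%Z -> (k <= n)%nat ->
  cf_digit (zk x n c 0) k = Some (bb x k).
Proof.
  intros Hx Hc Hk. unfold cf_digit. rewrite zk_cf by (auto; lia).
  rewrite zk_step by auto. f_equal. apply Int_part_shift.
  pose proof (inv_lt1 _ (zk_gt1 x n c (S k) Hx Hc ltac:(lia))). lra.
Qed.

Lemma zk_digit_last x n c : ~ is_rat x -> (2 <= c)%Z ->
  cf_digit (zk x n c 0) (n+1) = Some c.
Proof.
  intros Hx Hc. unfold cf_digit. rewrite zk_cf by (auto; lia). rewrite zk_last.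
  f_equal. rewrite <- (Rplus_0_r (IZR c)). apply Int_part_shift. lra.
Qed.

Lemma zk_rat x n c : ~ is_rat x -> (2 <= c)%Z -> is_rat (zk x n c 0).
Proof.
  intros Hx Hc.
  assert (forall j, (j <= n + 1)%nat -> is_rat (zz x n c j) /\ ((j <= n)%nat -> 1 < zz x n c j)).
  { induction j as [|j IH]; intros Hj.
    - split. apply is_rat_IZR. intros _. simpl. apply IZR_le in Hc. lra.
    - destruct (IH ltac:(lia)) as [R1 G1]. specialize (G1 ltac:(lia)). split.
      + simpl. apply is_rat_plus; [apply is_rat_IZR|]. apply is_rat_inv; auto; lra.
      + intros Hj'. simpl. assert (1 <= bb x (n - j))%Z by (apply bb_ge1; auto; lia).
        apply IZR_le in H. assert (0 < / zz x n c j) by (apply Rinv_0_lt_compat; lra). lra. }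
  unfold zk. apply H. lia.
Qed.

Definition cc x n := Z.max (bb x (n+1)) 2.
Definition dd x n k := Rabs (sq x k - zk x n (cc x n) k).

Lemma cc_ge2 x n : (2 <= cc x n)%Z.
Proof. unfold cc. lia. Qed.

Lemma dd_last x n : ~ is_rat x -> dd x n (n+1) <= 1.
Proof.
  intros Hx. unfold dd. rewrite zk_last. unfold cc.
  pose proof (bb_ge1 x (n+1) Hx ltac:(lia)).
  pose proof (frac_bounds (sq x (n+1))). rewrite frac_def in H0. fold (bb x (n+1)) in H0.
  destruct (Z.le_gt_cases 2 (bb x (n+1))).
  - rewrite Z.max_l by lia. rewrite Rabs_right by lra. lra.
  - rewrite Z.max_r by lia. assert (bb x (n+1) = 1)%Z by lia. rewrite H2 in H0.
    apply Rabs_le. lra.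
Qed.

Lemma dd_step x n k : ~ is_rat x -> (k <= n)%nat ->
  dd x n k = dd x n (S k) * / sq x (S k) * / zk x n (cc x n) (S k).
Proof.
  intros Hx Hk. unfold dd.
  pose proof (sq_gt1 x (S k) Hx ltac:(lia)).
  pose proof (zk_gt1 x n (cc x n) (S k) Hx (cc_ge2 x n) ltac:(lia)).
  rewrite (sq_decomp x k Hx), (zk_step x n (cc x n) k Hk).
  replace (IZR (bb x k) + / sq x (S k) - (IZR (bb x k) + / zk x n (cc x n) (S k)))
    with ((zk x n (cc x n) (S k) - sq x (S k)) * / sq x (S k) * / zk x n (cc x n) (S k))
    by (field; lra).
  rewrite !Rabs_mult. rewrite <- Rabs_Ropp. replace (- (zk x n (cc x n) (S k) - sq x (S k))) with (sq x (S k) - zk x n (cc x n) (S k)) by ring.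
  rewrite (Rabs_right (/ sq x (S k))) by (left; apply Rinv_0_lt_compat; lra).
  rewrite (Rabs_right (/ zk x n (cc x n) (S k))) by (left; apply Rinv_0_lt_compat; lra).
  reflexivity.
Qed.

Lemma dd_mono x n k : ~ is_rat x -> (k <= n)%nat -> dd x n k <= dd x n (S k).
Proof.
  intros Hx Hk. rewrite dd_step by auto.
  pose proof (sq_gt1 x (S k) Hx ltac:(lia)).
  pose proof (zk_gt1 x n (cc x n) (S k) Hx (cc_ge2 x n) ltac:(lia)).
  pose proof (inv_lt1 _ H). pose proof (inv_lt1 _ H0).
  assert (0 <= dd x n (S k)) by apply Rabs_pos.
  set (a := / sq x (S k)) in *. set (b := / zk x n (cc x n) (S k)) in *.
  assert (a * b <= 1) by nra. nra.
Qed.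

Lemma dd_le1 x n k : ~ is_rat x -> (k <= n + 1)%nat -> dd x n k <= 1.
Proof.
  intros Hx. 
  assert (forall j, (j <= n + 1)%nat -> dd x n (n + 1 - j) <= 1).
  { induction j as [|j IH]; intros Hj.
    - replace (n+1-0)%nat with (n+1)%nat by lia. apply dd_last; auto.
    - specialize (IH ltac:(lia)). replace (n + 1 - j)%nat with (S (n + 1 - S j)) in IH by lia.
      pose proof (dd_mono x n (n + 1 - S j) Hx ltac:(lia)). lra. }
  intros Hk. replace k with (n + 1 - (n + 1 - k))%nat by lia. apply H. lia.
Qed.

Lemma prod2 b s2 : (1 <= b)%Z -> 1 < s2 -> 2 <= (IZR b + / s2) * s2.
Proof.
  intros Hb Hs. apply IZR_le in Hb.
  replace ((IZR b + / s2) * s2) with (IZR b * s2 + 1) by (field; lra).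
  assert (0 <= (IZR b - 1) * s2) by (apply Rmult_le_pos; lra).
  replace ((IZR b - 1) * s2) with (IZR b * s2 - s2) in H by ring. lra.
Qed.

Lemma dd_two x n k : ~ is_rat x -> (k + 1 <= n)%nat -> 4 * dd x n k <= dd x n (S (S k)).
Proof.
  intros Hx Hk. rewrite (dd_step x n k Hx) by lia. rewrite (dd_step x n (S k) Hx) by lia.
  set (c := cc x n).
  pose proof (sq_gt1 x (S k) Hx ltac:(lia)).
  pose proof (zk_gt1 x n c (S k) Hx (cc_ge2 x n) ltac:(lia)).
  pose proof (sq_gt1 x (S (S k)) Hx ltac:(lia)).
  pose proof (zk_gt1 x n c (S (S k)) Hx (cc_ge2 x n) ltac:(lia)).
  assert (P1 : 2 <= sq x (S k) * sq x (S (S k))).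
  { rewrite (sq_decomp x (S k) Hx) at 1. apply prod2; auto. apply bb_ge1; auto; lia. }
  assert (P2 : 2 <= zk x n c (S k) * zk x n c (S (S k))).
  { rewrite (zk_step x n c (S k)) at 1 by lia. apply prod2; auto. apply bb_ge1; auto; lia. }
  assert (0 <= dd x n (S (S k))) by apply Rabs_pos.
  set (D := dd x n (S (S k))) in *.
  set (s1 := sq x (S k)) in *. set (s2 := sq x (S (S k))) in *.
  set (z1 := zk x n c (S k)) in *. set (z2 := zk x n c (S (S k))) in *.
  replace (4 * (D * / s2 * / z2 * / s1 * / z1)) with (D * (4 / ((s1 * s2) * (z1 * z2)))) by (field; lra).
  assert (4 <= (s1 * s2) * (z1 * z2)) by nra.
  assert (4 / ((s1 * s2) * (z1 * z2)) <= 1).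
  { apply Rmult_le_reg_r with ((s1 * s2) * (z1 * z2)); [lra|]. unfold Rdiv. rewrite Rmult_assoc, Rinv_l by lra. lra. }
  nra.
Qed.

Lemma dd_geom x n : ~ is_rat x -> forall i, (2 * i <= n + 1)%nat -> dd x n 0 * 4 ^ i <= 1.
Proof.
  intros Hx.
  assert (forall i, (2 * i <= n + 1)%nat -> dd x n 0 * 4 ^ i <= dd x n (2 * i)).
  { induction i as [|i IH]; intros Hi.
    - simpl. lra.
    - specialize (IH ltac:(lia)). pose proof (dd_two x n (2 * i) Hx ltac:(lia)).
      replace (2 * S i)%nat with (S (S (2 * i))) by lia. simpl pow. lra. }
  intros i Hi. apply Rle_trans with (1 := H i Hi). apply dd_le1; auto; lia.
Qed.

Lemma ln_le_mono a b : 0 < a -> a <= b -> ln a <= ln b.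
Proof. intros Ha Hab. destruct (Req_dec a b). subst; lra. left; apply ln_increasing; lra. Qed.

Lemma nat_above (A : R) : exists n : nat, A < INR n.
Proof. destruct (INR_archimed 1 A ltac:(lra)) as [n Hn]. exists n. lra. Qed.

Lemma INR_lt_pow4 i : INR i < 4 ^ i.
Proof.
  induction i as [|i IH]. simpl; lra. rewrite S_INR. simpl.
  assert (1 <= 4 ^ i) by (apply pow_R1_Rle; lra). lra.
Qed.

Lemma ln3_ge1 : 1 <= ln 3.
Proof. rewrite <- (ln_exp 1) at 1. apply ln_le_mono. apply exp_pos. apply exp_le_3. Qed.

Lemma two_le_bound (j : nat) : (3 <= j)%nat -> 2 <= INR j * ln (INR j) ^ 2.
Proof.
  intros Hj. assert (3 <= INR j) by (apply (le_INR 3) in Hj; simpl in Hj; lra).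
  assert (1 <= ln (INR j)) by (apply Rle_trans with (ln 3); [apply ln3_ge1| apply ln_le_mono; lra]).
  simpl. nra.
Qed.

Lemma sq0 x : sq x 0 = x.
Proof. reflexivity. Qed.

Lemma approx B x eps : 0 < B -> inT B x -> ~ is_rat x -> 0 < eps ->
  exists y : Qc, inT B (qc2R y) /\ Rabs (qc2R y - x) < eps.
Proof.
  intros HB HT Hx He.
  destruct (nat_above (/ eps)) as [i Hi].
  set (n := (2 * i + 2)%nat).
  pose proof (dd_geom x n Hx i ltac:(unfold n; lia)) as G.
  pose proof (INR_lt_pow4 i).
  assert (Hd : dd x n 0 < eps).
  { assert (0 < / eps) by (apply Rinv_0_lt_compat; lra).
    assert (0 <= dd x n 0) by apply Rabs_pos.
    assert (/ eps < 4 ^ i) by lra.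
    apply Rmult_lt_reg_r with (4 ^ i); [lra|].
    apply Rle_lt_trans with 1; auto.
    apply Rmult_lt_reg_l with (/ eps); auto. rewrite <- Rmult_assoc, Rinv_l by lra. lra. }
  destruct (zk_rat x n (cc x n) Hx (cc_ge2 x n)) as [Y HY].
  exists Y. split.
  - rewrite <- HY. intros j k Hj Hdig.
    destruct (le_lt_dec j n) as [Hjn|Hjn].
    + rewrite zk_digit in Hdig by (auto; apply cc_ge2). inversion Hdig; subst k.
      apply (HT j); auto. unfold cf_digit. destruct (sq_spec x j Hx) as [E _]. rewrite E. reflexivity.
    + destruct (Nat.eq_dec j (n+1)) as [Ej|Ej].
      * subst j. rewrite zk_digit_last in Hdig by (auto; apply cc_ge2). inversion Hdig; subst k.
        unfold cc. destruct (Z.le_gt_cases 2 (bb x (n+1))).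
        -- rewrite Z.max_l by lia. apply (HT (n+1)%nat); [lia|].
           unfold cf_digit. destruct (sq_spec x (n+1) Hx) as [E _]. rewrite E. reflexivity.
        -- rewrite Z.max_r by lia. apply Rle_trans with (2 := Rmax_r _ _).
           apply two_le_bound. unfold n; lia.
      * exfalso. unfold cf_digit in Hdig.
        rewrite (cf_rem_None_le _ (n+2) j) in Hdig; [discriminate| lia|].
        apply zk_end; auto; apply cc_ge2.
  - rewrite <- HY. rewrite <- Rabs_Ropp. replace (- (zk x n (cc x n) 0 - x)) with (sq x 0 - zk x n (cc x n) 0) by (rewrite sq0; ring).
    exact Hd.
Qed.

Lemma ln_lt_pow a L : 0 < a -> 0 < L -> ln L < Rpower L a / a.
Proof.
  intros Ha HL. pose proof (ln_lt_self (Rpower L a) (exp_pos _)).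
  rewrite ln_Rpower in H. apply Rmult_lt_reg_l with a; auto.
  unfold Rdiv. rewrite (Rmult_comm (Rpower L a)), <- Rmult_assoc, Rinv_r by lra. lra.
Qed.

Lemma Rpower_pos L a : 0 < Rpower L a.
Proof. apply exp_pos. Qed.

Lemma Rpower_le1 L a : 1 <= L -> 0 <= a -> 1 <= Rpower L a.
Proof. intros HL Ha. rewrite <- (Rpower_O L) by lra. apply Rle_Rpower; auto. Qed.

Lemma eventually_pow a c : 0 < a -> exists L0, 1 <= L0 /\ forall L, L0 <= L -> c <= Rpower L a.
Proof.
  intros Ha. exists (Rpower (Rmax c 1) (/ a)). split.
  - apply Rpower_le1. apply Rmax_r. left; apply Rinv_0_lt_compat; auto.
  - intros L HL. apply Rle_trans with (Rmax c 1); [apply Rmax_l|].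
    assert (1 <= Rpower (Rmax c 1) (/ a)).
    { apply Rpower_le1. apply Rmax_r. left; apply Rinv_0_lt_compat; auto. }
    replace (Rmax c 1) with (Rpower (Rpower (Rmax c 1) (/ a)) a).
    + apply Rle_Rpower_l; lra.
    + rewrite Rpower_mult, Rinv_l by lra. apply Rpower_1. pose proof (Rmax_r c 1); lra.
Qed.


Lemma Rpower_leL L a : 1 <= L -> a <= 1 -> Rpower L a <= L.
Proof. intros HL Ha. rewrite <- (Rpower_1 L) at 2 by lra. apply Rle_Rpower; auto. Qed.

Lemma ceil_nat (P : R) : 0 <= P -> exists m : nat, P <= INR m <= P + 1.
Proof.
  intros HP. destruct (archimed P) as [H1 H2].
  exists (Z.to_nat (up P)). rewrite INR_IZR_INZ, Z2Nat.id.
  - lra.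
  - apply le_IZR. lra.
Qed.

Lemma asym lam (M : nat) : 1 < lam -> exists L0, 1 <= L0 /\ forall L, L0 <= L ->
  exists m : nat, (M <= m)%nat /\ L * ln L ^ 2 <= Rpower (INR m) lam /\
    INR (2 * m + 2) * ln (L * ln L ^ 2 + INR (m + 2) ^ 3 + 2) <= 3 / 4 * L.
Proof.
  intros Hlam.
  set (th := (1 + / lam) / 2).
  set (dl := (lam - 1) / 4).
  set (et := (1 - th) / 2).
  assert (ilam : 0 < / lam < 1) by (split; [apply Rinv_0_lt_compat; lra| rewrite <- Rinv_1; apply Rinv_lt_contravar; lra]).
  assert (thb : 0 < th < 1) by (unfold th; lra).
  assert (dlp : 0 < dl) by (unfold dl; lra).
  assert (etp : 0 < et) by (unfold et; lra).
  assert (thl : th * lam = 1 + 2 * dl) by (unfold th, dl; field; lra).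
  destruct (eventually_pow (dl / 2) (2 / dl)) as [L1 [L1g H1]]; [lra|].
  destruct (eventually_pow th (INR M)) as [L2 [L2g H2]]; [lra|].
  destruct (eventually_pow (1 - th) 1072) as [L3 [L3g H3]]; [lra|].
  destruct (eventually_pow et (48 / et)) as [L4 [L4g H4]]; [lra|].
  exists (Rmax (Rmax L1 L2) (Rmax L3 L4)). split.
  { apply Rle_trans with L1; auto. apply Rle_trans with (Rmax L1 L2); apply Rmax_l. }
  intros L HL.
  assert (HL1 : L1 <= L) by (apply Rle_trans with (2 := HL); apply Rle_trans with (Rmax L1 L2); apply Rmax_l).
  assert (HL2 : L2 <= L) by (apply Rle_trans with (2 := HL); apply Rle_trans with (Rmax L1 L2); [apply Rmax_r| apply Rmax_l]).
  assert (HL3 : L3 <= L) by (apply Rle_trans with (2 := HL); apply Rle_trans with (Rmax L3 L4); [apply Rmax_l| apply Rmax_r]).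
  assert (HL4 : L4 <= L) by (apply Rle_trans with (2 := HL); apply Rle_trans with (Rmax L3 L4); [apply Rmax_r| apply Rmax_r]).
  specialize (H1 L HL1). specialize (H2 L HL2). specialize (H3 L HL3). specialize (H4 L HL4).
  assert (Lg1 : 1 <= L) by lra.
  set (P := Rpower L th) in *.
  assert (Pb : 1 <= P <= L) by (split; [apply Rpower_le1| apply Rpower_leL]; lra).
  destruct (ceil_nat P ltac:(lra)) as [m Hm].
  exists m. split; [|split].
  - apply INR_le. lra.
  - assert (lnL0 : 0 <= ln L) by (apply ln_nonneg; lra).
    assert (lnLd : ln L <= Rpower L dl).
    { pose proof (ln_lt_pow (dl/2) L ltac:(lra) ltac:(lra)) as Ha.
      assert (Hb : Rpower L dl = Rpower L (dl/2) * Rpower L (dl/2)) by (rewrite <- Rpower_plus; f_equal; field).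
      pose proof (Rpower_pos L (dl/2)) as Hc.
      assert (Hd : Rpower L (dl / 2) / (dl / 2) = Rpower L (dl/2) * (2 / dl)) by (field; lra).
      rewrite Hd in Ha. rewrite Hb. nra. }
    apply Rle_trans with (Rpower P lam).
    + unfold P. rewrite Rpower_mult, thl, Rpower_plus, Rpower_1 by lra.
      replace (2 * dl) with (dl + dl) by ring. rewrite Rpower_plus.
      apply Rmult_le_compat_l; [lra|]. simpl. rewrite Rmult_1_r.
      apply Rmult_le_compat; lra.
    + apply Rle_Rpower_l; lra.
  - assert (lnL0 : 0 <= ln L) by (apply ln_nonneg; lra).
    assert (lnLL : ln L < L) by (apply ln_lt_self; lra).
    set (K1 := L * ln L ^ 2 + INR (m + 2) ^ 3 + 2).
    assert (Hm2 : INR (m + 2) <= 4 * L) by (rewrite plus_INR; simpl; lra).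
    assert (K1pos : 2 <= K1).
    { unfold K1. assert (0 <= L * ln L ^ 2) by (apply Rmult_le_pos; [lra| apply pow_le; lra]).
      assert (0 <= INR (m+2) ^ 3) by (apply pow_le, pos_INR). lra. }
    assert (K1b : K1 <= 67 * L ^ 3).
    { unfold K1. assert (L * ln L ^ 2 <= L ^ 3).
      { simpl. apply Rmult_le_compat_l; [lra|]. rewrite Rmult_1_r. apply Rmult_le_compat; lra. }
      assert (INR (m + 2) ^ 3 <= (4 * L) ^ 3) by (apply pow_incr; split; [apply pos_INR| lra]).
      assert (1 <= L ^ 3) by (apply pow_R1_Rle; lra).
      replace ((4 * L) ^ 3) with (64 * L ^ 3) in H0 by ring. lra. }
    assert (lnK : ln K1 <= ln 67 + 3 * ln L).
    { apply Rle_trans with (ln (67 * L ^ 3)); [apply ln_le_mono; lra|].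
      rewrite ln_mult by (try apply pow_lt; lra). rewrite <- Rpower_pow by lra. rewrite ln_Rpower. simpl; lra. }
    assert (ln67 : ln 67 < 67) by (apply ln_lt_self; lra).
    assert (H2m : INR (2 * m + 2) <= 6 * P) by (rewrite plus_INR, mult_INR; simpl; lra).
    assert (PL : P * Rpower L (1 - th) = L).
    { unfold P. rewrite <- Rpower_plus. replace (th + (1 - th)) with 1 by ring. apply Rpower_1; lra. }
    assert (Q1 : 402 * P <= 3 / 8 * L).
    { rewrite <- PL. nra. }
    assert (Q2 : 18 * P * ln L <= 3 / 8 * L).
    { pose proof (ln_lt_pow et L etp ltac:(lra)).
      assert (Rpower L (1 - th) = Rpower L et * Rpower L et) by (rewrite <- Rpower_plus; f_equal; unfold et; field).
      pose proof (Rpower_pos L et).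
      assert (Rpower L et / et <= Rpower L (1 - th) / 48).
      { rewrite H0. unfold Rdiv. 
        assert (/ et <= Rpower L et / 48).
        { apply Rmult_le_reg_r with 48; [lra|]. unfold Rdiv. rewrite Rmult_assoc, Rinv_l by lra.
          rewrite Rmult_1_r. apply Rle_trans with (2 := H4). right. field. lra. }
        unfold Rdiv in H6. nra. }
      assert (0 <= P) by lra.
      assert (Hl : ln L <= Rpower L (1 - th) / 48) by lra.
      apply Rle_trans with (18 * P * (Rpower L (1 - th) / 48)).
      { apply Rmult_le_compat_l; lra. }
      assert (18 * P * (Rpower L (1 - th) / 48) = 3 / 8 * (P * Rpower L (1 - th))) by field.
      lra. }
    apply Rle_trans with (6 * P * (ln 67 + 3 * ln L)).
    + assert (0 <= ln K1).
      { apply Rle_trans with (ln 2).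
        - left. rewrite <- ln_1. apply ln_increasing; lra.
        - apply ln_le_mono; lra. }
      apply Rmult_le_compat; auto. apply pos_INR.
    + nra.
Qed.

Lemma Cmod_le_sum (z : C) : Cmod z <= Rabs (Re z) + Rabs (Im z).
Proof.
  unfold Cmod. rewrite <- (sqrt_pow2 (Rabs (Re z) + Rabs (Im z))).
  - apply sqrt_le_1_alt. unfold Re, Im.
    rewrite <- (pow2_abs (fst z)), <- (pow2_abs (snd z)). pose proof (Rabs_pos (fst z)). pose proof (Rabs_pos (snd z)). nra.
  - pose proof (Rabs_pos (Re z)). pose proof (Rabs_pos (Im z)). lra.
Qed.

Lemma im_le_Cmod (c : C) : Rabs (Im c) <= Cmod c.
Proof.
  unfold Cmod, Im. rewrite <- (sqrt_pow2 (Rabs (snd c))) by apply Rabs_pos. apply sqrt_le_1_alt.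
  rewrite pow2_abs. pose proof (pow2_ge_0 (fst c)). lra.
Qed.

Lemma qc2R_inj y y' : qc2R y = qc2R y' -> y = y'.
Proof. intros H. apply Qc_is_canon. apply eqR_Qeq. exact H. Qed.

Lemma Rpower_ge_self (m : nat) lam : (1 <= m)%nat -> 1 < lam -> INR m <= Rpower (INR m) lam.
Proof.
  intros Hm Hl. assert (1 <= INR m) by (apply (le_INR 1); auto).
  rewrite <- (Rpower_1 (INR m)) at 1 by lra. apply Rle_Rpower; lra.
Qed.

Lemma cauchy_T (f : Qc -> C) lam : 1 < lam -> propS lam f ->
  forall B x, 0 < B -> inT B x -> ~ is_rat x -> forall eps, 0 < eps ->
  exists delta, 0 < delta /\ forall y y' : Qc, inT B (qc2R y) -> inT B (qc2R y') ->
    Rabs (qc2R y - x) < delta -> Rabs (qc2R y' - x) < delta ->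
    Cmod (Cminus (f y) (f y')) <= eps.
Proof.
  intros Hl HS B x HB HT Hx eps He.
  destruct (HS eps He) as [M HM].
  destruct (nat_above B) as [m0 Hm0].
  set (m := (M + m0 + 1)%nat).
  assert (mB : B <= Rpower (INR m) lam).
  { apply Rle_trans with (INR m); [|apply Rpower_ge_self; [unfold m; lia | lra]].
    assert (INR m0 <= INR m) by (apply le_INR; unfold m; lia). lra. }
  set (K := B + INR (m + 2) ^ 3 + 1).
  assert (HK : 1 <= K) by (unfold K; pose proof (pow_le (INR (m+2)) 3 (pos_INR _)); lra).
  assert (HBd : bounded_upto x K (m + 2)).
  { apply bounded_of_inT; try lra; auto. intros k _. destruct (irr_cf x Hx k) as [s [Hs _]]. congruence. }
  assert (Kp : 0 < (K + 1) ^ (2 * m + 2)) by (apply pow_lt; lra).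
  exists (/ (K + 1) ^ (2 * m + 2)). split; [apply Rinv_0_lt_compat; auto|].
  assert (Vin : forall y : Qc, inT B (qc2R y) -> Rabs (qc2R y - x) < / (K + 1) ^ (2 * m + 2) ->
             inV (Rpower (INR m) lam) m x y).
  { intros y Hy Hd.
    assert (Rabs (x - qc2R y) * (K + 1) ^ (2 * m + 2) < 1).
    { rewrite Rabs_minus_sym. apply Rmult_lt_reg_r with (/ (K + 1) ^ (2 * m + 2)).
      apply Rinv_0_lt_compat; auto. rewrite Rmult_assoc, Rinv_r, Rmult_1_r, Rmult_1_l by lra. auto. }
    destruct (shadow x (qc2R y) K m HK HBd H) as [Hlen Hdig].
    split; [apply inT_mono with B; auto|]. split; auto. }
  intros y y' Hy Hy' Hd Hd'.
  apply (HM m ltac:(unfold m; lia) x (inT_mono _ _ _ mB HT)); apply Vin; auto.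
Qed.

Definition lim_prop (f : Qc -> C) (x : R) (L : C) : Prop :=
  forall B, 0 < B -> inT B x -> ~ is_rat x -> forall eps, 0 < eps ->
    exists delta, 0 < delta /\ forall y : Qc, inT B (qc2R y) -> Rabs (qc2R y - x) < delta ->
      Cmod (Cminus (f y) L) < eps.

Lemma small_inv (d : R) : 0 < d -> exists N : nat, forall n, (N <= n)%nat -> / (INR n + 1) < d.
Proof.
  intros Hd. destruct (nat_above (/ d)) as [N HN]. exists N. intros n Hn.
  assert (INR N <= INR n) by (apply le_INR; auto).
  assert (0 < / d) by (apply Rinv_0_lt_compat; auto).
  rewrite <- (Rinv_inv d). apply Rinv_lt_contravar; [apply Rmult_lt_0_compat|]; lra.
Qed.

Lemma lim_exists (f : Qc -> C) lam : 1 < lam -> propS lam f ->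
  forall x, ~ is_rat x -> exists L, lim_prop f x L.
Proof.
  intros Hl HS x Hx.
  destruct (classic (exists B0, 0 < B0 /\ inT B0 x)) as [[B0 [HB0 HT0]] | Hno].
  2: { exists (0, 0). intros B HB HT. exfalso. apply Hno. eauto. }
  assert (ap : forall n : nat, exists y : Qc, inT B0 (qc2R y) /\ Rabs (qc2R y - x) < / (INR n + 1)).
  { intros n. apply approx; auto. apply Rinv_0_lt_compat. pose proof (pos_INR n). lra. }
  set (ys := fun n => proj1_sig (constructive_indefinite_description _ (ap n))).
  assert (Hys : forall n, inT B0 (qc2R (ys n)) /\ Rabs (qc2R (ys n) - x) < / (INR n + 1)).
  { intros n. unfold ys. exact (proj2_sig (constructive_indefinite_description _ (ap n))). }
  set (u := fun n => f (ys n)).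
  assert (Cu : forall eps, 0 < eps -> exists N, forall n m, (N <= n)%nat -> (N <= m)%nat ->
     Cmod (Cminus (u n) (u m)) <= eps).
  { intros eps He. destruct (cauchy_T f lam Hl HS B0 x HB0 HT0 Hx eps He) as [d [Hd Hc]].
    destruct (small_inv d Hd) as [N HN]. exists N. intros n m Hn Hm.
    apply Hc; try apply Hys. 
    - apply Rlt_trans with (2 := HN n Hn). apply Hys.
    - apply Rlt_trans with (2 := HN m Hm). apply Hys. }
  assert (CRe : Cauchy_crit (fun n => Re (u n))).
  { intros eps He. destruct (Cu (eps/2) ltac:(lra)) as [N HN]. exists N. intros n m Hn Hm.
    unfold R_dist. pose proof (HN n m Hn Hm). pose proof (re_le_Cmod (Cminus (u n) (u m))).
    change (Re (Cminus (u n) (u m))) with (Re (u n) - Re (u m)) in H0. lra. }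
  assert (CIm : Cauchy_crit (fun n => Im (u n))).
  { intros eps He. destruct (Cu (eps/2) ltac:(lra)) as [N HN]. exists N. intros n m Hn Hm.
    unfold R_dist. pose proof (HN n m Hn Hm). pose proof (im_le_Cmod (Cminus (u n) (u m))).
    change (Im (Cminus (u n) (u m))) with (Im (u n) - Im (u m)) in H0. lra. }
  destruct (Rcomplete.R_complete _ CRe) as [lr Hlr].
  destruct (Rcomplete.R_complete _ CIm) as [li Hli].
  set (L := (lr, li) : C).
  assert (Conv : forall eps, 0 < eps -> exists N, forall n, (N <= n)%nat -> Cmod (Cminus (u n) L) < eps).
  { intros eps He. destruct (Hlr (eps/2) ltac:(lra)) as [N1 H1].
    destruct (Hli (eps/2) ltac:(lra)) as [N2 H2]. exists (N1 + N2)%nat. intros n Hn.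
    specialize (H1 n ltac:(lia)). specialize (H2 n ltac:(lia)). unfold R_dist in H1, H2.
    pose proof (Cmod_le_sum (Cminus (u n) L)).
    change (Re (Cminus (u n) L)) with (Re (u n) - lr) in H.
    change (Im (Cminus (u n) L)) with (Im (u n) - li) in H. lra. }
  exists L. intros B HB HT _ eps He.
  set (B' := Rmax B B0).
  assert (HB' : 0 < B') by (unfold B'; pose proof (Rmax_r B B0); lra).
  assert (HT' : inT B' x) by (apply inT_mono with B; auto; apply Rmax_l).
  destruct (cauchy_T f lam Hl HS B' x HB' HT' Hx (eps/2) ltac:(lra)) as [d [Hd Hc]].
  exists d. split; auto. intros y Hy Hyd.
  destruct (small_inv d Hd) as [N1 HN1]. destruct (Conv (eps/2) ltac:(lra)) as [N2 HN2].
  set (n := (N1 + N2)%nat).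
  assert (E : Cminus (f y) L = Cplus (Cminus (f y) (u n)) (Cminus (u n) L)) by ring.
  rewrite E. apply Rle_lt_trans with (1 := Cmod_triangle _ _).
  assert (Cmod (Cminus (f y) (u n)) <= eps / 2).
  { apply Hc; auto.
    - apply inT_mono with B; auto; apply Rmax_l.
    - apply inT_mono with B0; [apply Rmax_r| apply Hys].
    - apply Rlt_trans with (2 := HN1 n ltac:(unfold n; lia)). apply Hys. }
  pose proof (HN2 n ltac:(unfold n; lia)). lra.
Qed.

Lemma fstar_exists (f : Qc -> C) lam : 1 < lam -> propS lam f ->
  exists fstar, is_fstar f fstar.
Proof.
  intros Hl HS.
  set (P := fun x L => (forall y, x = qc2R y -> L = f y) /\ lim_prop f x L).
  assert (ex : forall x, exists L, P x L).
  { intros x. destruct (classic (is_rat x)) as [[y0 Hy0] | Hx].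
    - exists (f y0). split.
      + intros y Hy. f_equal. apply qc2R_inj. congruence.
      + intros B _ _ Hn. exfalso. apply Hn. exists y0. auto.
    - destruct (lim_exists f lam Hl HS x Hx) as [L HL]. exists L. split; auto.
      intros y Hy. exfalso. apply Hx. exists y. auto. }
  exists (fun x => proj1_sig (constructive_indefinite_description _ (ex x))).
  split.
  - intros y. destruct (proj2_sig (constructive_indefinite_description _ (ex (qc2R y)))) as [H1 _].
    apply H1. reflexivity.
  - intros B x HB HT Hx eps He.
    destruct (proj2_sig (constructive_indefinite_description _ (ex x))) as [_ H2].
    apply H2; auto.
Qed.

Lemma exp_le_mono a b : a <= b -> exp a <= exp b.
Proof. intros H. destruct (Req_dec a b). subst; lra. left; apply exp_increasing; lra. Qed.

Lemma ratio_Qc (a q : nat) : (0 < q)%nat -> exists y : Qc, qc2R y = INR a / INR q.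
Proof.
  intros Hq.
  assert (is_rat (INR a / INR q)).
  { apply is_rat_Q. exists (inject_Z (Z.of_nat a) / inject_Z (Z.of_nat q))%Q.
    rewrite Q2R_div.
    - unfold Q2R. simpl. rewrite !INR_IZR_INZ. field. apply not_0_IZR. lia.
    - unfold Qeq. simpl. lia. }
  destruct H as [y Hy]. exists y. auto.
Qed.

Lemma pow_as_exp (b : R) (n : nat) : 0 < b -> b ^ n = exp (INR n * ln b).
Proof. intros Hb. rewrite <- Rpower_pow by auto. reflexivity. Qed.

Lemma ln9 : 1 < ln 9.
Proof.
  replace 9 with (3 * 3) by lra. rewrite ln_mult by lra. pose proof ln3_ge1. lra.
Qed.

Lemma part2 (f : Qc -> C) lam : 1 < lam -> propS lam f ->
  forall fstar : R -> C, is_fstar f fstar ->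
     forall eps : R, 0 < eps -> exists q0 : nat, forall q : nat,
       (2 <= q)%nat -> (q0 <= q)%nat ->
       forall a : nat, inA q a ->
       forall x : R,
         (INR a - Rpower (INR q) (1/4)) / INR q < x <
           (INR a + Rpower (INR q) (1/4)) / INR q ->
         (inTq q x \/ in_scaledA q x) ->
         Cmod (Cminus (fstar (INR a / INR q)) (fstar x)) < eps.
Proof.
  intros Hl HS fstar [Hf1 Hf2] eps He.
  destruct (HS (eps/3) ltac:(lra)) as [M HM].
  destruct (asym lam M Hl) as [L0 [HL0 Hasym]].
  destruct (nat_above (exp L0 + 9)) as [q0 Hq0].
  exists q0. intros q Hq2 Hq0q a [Haq [Hg HaT]] x Hx Hcase.
  assert (Qq : exp L0 + 9 < INR q) by (apply Rlt_le_trans with (1 := Hq0); apply le_INR; auto).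
  pose proof (exp_pos L0).
  set (L := ln (INR q)).
  assert (LL0 : L0 <= L).
  { unfold L. rewrite <- (ln_exp L0) at 1. apply ln_le_mono; lra. }
  assert (L1 : 1 < L).
  { unfold L. apply Rlt_le_trans with (1 := ln9). apply ln_le_mono; lra. }
  destruct (Hasym L LL0) as [m [HMm [Hpow Hlog]]].
  assert (BqE : Bq q = L * ln L ^ 2) by reflexivity.
  assert (lnL : 0 < ln L) by (rewrite <- ln_1; apply ln_increasing; lra).
  assert (Bqpos : 0 < Bq q) by (rewrite BqE; apply Rmult_lt_0_compat; [lra| apply pow_lt; lra]).
  set (K := Bq q + INR (m + 2) ^ 3 + 1).
  assert (HK : 1 <= K) by (unfold K; pose proof (pow_le (INR (m+2)) 3 (pos_INR _)); lra).
  assert (qpos : 0 < INR q) by lra.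
  assert (Kpow : (K + 1) ^ (2 * m + 2) <= Rpower (INR q) (3/4)).
  { rewrite pow_as_exp by lra. unfold Rpower. apply exp_le_mono.
    replace (K + 1) with (L * ln L ^ 2 + INR (m + 2) ^ 3 + 2) by (unfold K; rewrite BqE; ring).
    fold L. lra. }
  assert (Q34 : Rpower (INR q) (3/4) < INR q).
  { rewrite <- (Rpower_1 (INR q)) at 2 by lra. apply Rpower_lt; lra. }
  assert (Q14 : Rpower (INR q) (1/4) * Rpower (INR q) (3/4) = INR q).
  { rewrite <- Rpower_plus. replace (1/4 + 3/4) with 1 by field. apply Rpower_1; lra. }
  set (X := INR a / INR q).
  assert (Hex : forall k, (k <= m + 2)%nat -> cf_rem X k <> None).
  { intros k Hk Hn. 
    assert (cf_rem X (m+2) <> None).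
    { apply (euclid_len a q K (m+2)); auto; try lia.
      - intros k' s Hk' Hs. pose proof (digit_bound (Bq q) X k' s ltac:(lra) HaT ltac:(lia) Hs).
        pose proof (INR_pow3_mono k' (m+2) ltac:(lia)). unfold K. lra.
      - apply Rle_lt_trans with (2 := Q34). apply Rle_trans with (2 := Kpow).
        apply Rle_trans with ((K+1) ^ (m + 2)).
        + apply pow_incr. lra.
        + apply Rle_pow; [lra| lia]. }
    apply H0. apply (cf_rem_None_le _ k); auto. }
  assert (HBd : bounded_upto X K (m + 2)).
  { apply bounded_of_inT; auto; lra. }
  assert (Close : forall z, Rabs (X - z) < Rpower (INR q) (1/4) / INR q ->
            cf_len_ge z m /\ forall j, (j <= m)%nat -> cf_digit z j = cf_digit X j).
  { intros z Hz. apply shadow with K; auto.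
    assert (0 < (K + 1) ^ (2 * m + 2)) by (apply pow_lt; lra).
    apply Rle_lt_trans with (Rabs (X - z) * Rpower (INR q) (3/4)).
    { apply Rmult_le_compat_l; auto. apply Rabs_pos. }
    assert (0 < Rpower (INR q) (3/4)) by apply Rpower_pos.
    apply Rlt_le_trans with (Rpower (INR q) (1/4) / INR q * Rpower (INR q) (3/4)).
    { apply Rmult_lt_compat_r; auto. }
    right. replace (Rpower (INR q) (1 / 4) / INR q * Rpower (INR q) (3 / 4))
      with (Rpower (INR q) (1 / 4) * Rpower (INR q) (3 / 4) / INR q) by (field; lra).
    rewrite Q14. field. lra. }
  assert (HxX : Rabs (X - x) < Rpower (INR q) (1/4) / INR q).
  { unfold X. apply Rabs_def1.
    - unfold Rdiv in *. destruct Hx. 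
      assert (INR a * / INR q - x < Rpower (INR q) (1/4) * / INR q).
      { replace ((INR a - Rpower (INR q) (1 / 4)) * / INR q) with (INR a * / INR q - Rpower (INR q) (1 / 4) * / INR q) in H0 by ring. lra. }
      exact H2.
    - unfold Rdiv in *. destruct Hx.
      replace ((INR a + Rpower (INR q) (1 / 4)) * / INR q) with (INR a * / INR q + Rpower (INR q) (1 / 4) * / INR q) in H1 by ring. lra. }
  assert (mT : inT (Rpower (INR m) lam) X) by (apply inT_mono with (Bq q); auto; rewrite BqE; auto).
  destruct (ratio_Qc a q ltac:(lia)) as [Xq HXq].
  assert (VX : inV (Rpower (INR m) lam) m X Xq).
  { unfold inV. rewrite HXq. split; auto. split.
    - unfold cf_len_ge. apply Hex. lia.
    - intros; reflexivity. }
  assert (EX : fstar X = f Xq) by (unfold X; rewrite <- HXq; apply Hf1).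
  change (INR a / INR q) with X. rewrite EX.
  assert (Hbq : Bq q <= Rpower (INR m) lam) by (rewrite BqE; auto).
  destruct Hcase as [[H01 [Hirr HxT]] | [a' [[Ha'q [Hg' Ha'T]] Hxa']]].
  - destruct (Hf2 (Bq q) x Bqpos HxT Hirr (eps/2) ltac:(lra)) as [d1 [Hd1 Hlim]].
    set (d2 := Rpower (INR q) (1/4) / INR q - Rabs (X - x)).
    assert (Hd2 : 0 < d2) by (unfold d2; lra).
    destruct (approx (Bq q) x (Rmin d1 d2) Bqpos HxT Hirr ltac:(apply Rmin_pos; auto)) as [y [HyT Hyd]].
    pose proof (Rmin_l d1 d2). pose proof (Rmin_r d1 d2).
    specialize (Hlim y HyT ltac:(lra)).
    assert (Hyc : Rabs (X - qc2R y) < Rpower (INR q) (1/4) / INR q).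
    { replace (X - qc2R y) with ((X - x) + - (qc2R y - x)) by ring.
      apply Rle_lt_trans with (1 := Rabs_triang _ _). rewrite Rabs_Ropp. unfold d2 in *. lra. }
    destruct (Close (qc2R y) Hyc) as [Hlen Hdig].
    assert (VY : inV (Rpower (INR m) lam) m X y).
    { split; [apply inT_mono with (Bq q); auto|]. split; auto. }
    pose proof (HM m HMm X mT Xq y VX VY).
    assert (E : Cminus (f Xq) (fstar x) = Cplus (Cminus (f Xq) (f y)) (Cminus (f y) (fstar x))) by ring.
    rewrite E. apply Rle_lt_trans with (1 := Cmod_triangle _ _). lra.
  - destruct (ratio_Qc a' q ltac:(lia)) as [xq Hxq].
    rewrite Hxa', <- Hxq, Hf1.
    rewrite Hxa', <- Hxq in HxX.
    destruct (Close (qc2R xq) HxX) as [Hlen Hdig].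
    assert (VY : inV (Rpower (INR m) lam) m X xq).
    { split; [apply inT_mono with (Bq q); auto; rewrite Hxq; auto|]. split; auto. }
    pose proof (HM m HMm X mT Xq xq VX VY). lra.
Qed.

Theorem lemma3p3 (f : Qc -> C) :
  (exists lam : R, 1 < lam /\ propS lam f) ->
  (exists fstar : R -> C, is_fstar f fstar) /\
  (forall fstar : R -> C, is_fstar f fstar ->
     forall eps : R, 0 < eps -> exists q0 : nat, forall q : nat,
       (2 <= q)%nat -> (q0 <= q)%nat ->
       forall a : nat, inA q a ->
       forall x : R,
         (INR a - Rpower (INR q) (1/4)) / INR q < x <
           (INR a + Rpower (INR q) (1/4)) / INR q ->
         (inTq q x \/ in_scaledA q x) ->
         Cmod (Cminus (fstar (INR a / INR q)) (fstar x)) < eps).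
Proof.
  intros [lam [Hl HS]]. split.
  - eapply fstar_exists; eauto.
  - apply (part2 f lam Hl HS).
Qed.
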